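(* Let $(X,d_X)$ be a geodesic metric space, let $n\ge 2$, and let $\delta,\epsilon,R>0$. Suppose $F\colon\mathbb{H}^n\to X$ satisfies: (1) for every $x\in\mathbb{R}^{n-1}$, $F\circ\eta_x\colon\mathbb{R}\to X$ is a geodesic (i.e. an isometric embedding of $\mathbb{R}$); (2) for distinct $x,x'\in\mathbb{R}^{n-1}$, the geodesics $F\circ\eta_x$ and $F\circ\eta_{x'}$ are two sides of an ideal $\delta$-slim triangle in $X$; (3) for all $x,x'\in\mathbb{R}^{n-1}$ and $t\in\mathbb{R}$, if $e^{-t}|x-x'|<\epsilon$ then $d_X(F(x,t),F(x',t))\le R$; (4) whenever $(x_k,t_k),(x_k',t_k)\in\mathbb{H}^n$ satisfy $\lim_{k\to\infty} e^{-t_k}|x_k-x_k'|=\infty$, we have $\lim_{k\to\infty} d_X(F(x_k,t_k),F(x_k',t_k))=\infty$. Then there exists $K\ge0$ such that $|d_{\mathbb{H}}(p,q) - d_X(F(p),F(q))|\le K$ for all $p,q\in\mathbb{H}^n$.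
   Context: Exponential model of hyperbolic space: $\mathbb{H}^n=\mathbb{R}^{n-1}\times\mathbb{R}$ with coordinates $(x,t)$ and metric $ds^2=e^{-2t}(dx_1^2+\dots+dx_{n-1}^2)+dt^2$; $d_{\mathbb{H}}$ is its distance. It is isometric to the upper half-space model via $(x,t)\mapsto(x,e^t)$. For $x\in\mathbb{R}^{n-1}$, the vertical geodesic is $\eta_x(t)=(x,t)$, parametrized by arc length. ''$F\circ\eta_x$ and $F\circ\eta_{x'}$ are two sides of an ideal $\delta$-slim triangle'' means there is a bi-infinite geodesic $\mathcal{R}_X$ in $X$ such that the three geodesics $F\circ\eta_x$, $F\circ\eta_{x'}$, $\mathcal{R}_X$ form an ideal triangle each of whose sides lies in the closed $\delta$-neighborhood of the union of the other two. *)

(* Defs.v *)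
From Stdlib Require Import Reals.
Open Scope R_scope.

(** R^m, encoded as real sequences vanishing from index m on
    (so that Leibniz equality is equality of vectors). *)
Definition Vec (m : nat) : Type :=
  { f : nat -> R | forall i : nat, (m <= i)%nat -> f i = 0 }.

Definition vcoord {m : nat} (v : Vec m) (i : nat) : R := proj1_sig v i.

Fixpoint sumsq (m : nat) (f : nat -> R) : R :=
  match m with
  | O => 0
  | S k => sumsq k f + f k * f k
  end.

Definition euc_dist {m : nat} (x y : Vec m) : R :=
  sqrt (sumsq m (fun i => vcoord x i - vcoord y i)).

Definition Hn (n : nat) : Type := (Vec (n - 1) * R)%type.

Definition arcosh (z : R) : R := ln (z + sqrt (z * z - 1)).

(** Hyperbolic distance of the metric e^{-2t}|dx|^2 + dt^2, computed through
    the isometry (x,t) |-> (x, e^t) with the upper half-space model. *)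
Definition dH {n : nat} (p q : Hn n) : R :=
  let (x, t) := p in let (y, u) := q in
  arcosh (1 + (euc_dist x y * euc_dist x y + (exp t - exp u) * (exp t - exp u))
              / (2 * exp t * exp u)).

Definition eta {n : nat} (x : Vec (n - 1)) (t : R) : Hn n := (x, t).

Definition is_metric {X : Type} (d : X -> X -> R) : Prop :=
  (forall p q, 0 <= d p q) /\
  (forall p q, d p q = 0 <-> p = q) /\
  (forall p q, d p q = d q p) /\
  (forall p q r, d p r <= d p q + d q r).

Definition geodesic_space {X : Type} (d : X -> X -> R) : Prop :=
  forall p q : X, exists g : R -> X,
    g 0 = p /\ g (d p q) = q /\
    forall s t, 0 <= s <= d p q -> 0 <= t <= d p q -> d (g s) (g t) = Rabs (s - t).

Definition is_geodesic_line {X : Type} (d : X -> X -> R) (g : R -> X) : Prop :=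
  forall s t, d (g s) (g t) = Rabs (s - t).

Definition asymptotic_pos {X : Type} (d : X -> X -> R) (g1 g2 : R -> X) : Prop :=
  exists C : R, forall t, 0 <= t -> d (g1 t) (g2 t) <= C.

Definition rev_line {X : Type} (g : R -> X) : R -> X := fun t => g (- t).

Definition in_closed_nbhd {X : Type} (d : X -> X -> R) (delta : R)
    (A : X -> Prop) (p : X) : Prop :=
  forall eps, 0 < eps -> exists a, A a /\ d p a < delta + eps.

Definition on_line {X : Type} (g : R -> X) (p : X) : Prop := exists t, g t = p.

Definition side_slim {X : Type} (d : X -> X -> R) (delta : R)
    (g h k : R -> X) : Prop :=
  forall t, in_closed_nbhd d delta (fun q => on_line h q \/ on_line k q) (g t).

(** [g1] and [g2] are two sides of an ideal delta-slim triangle: there is a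
    geodesic line [r] such that g1, g2 share their +oo end, r goes from the
    -oo end of g1 to the -oo end of g2, and the triangle is delta-slim. *)
Definition ideal_slim_sides {X : Type} (d : X -> X -> R) (delta : R)
    (g1 g2 : R -> X) : Prop :=
  exists r : R -> X,
    is_geodesic_line d r /\
    asymptotic_pos d g1 g2 /\
    asymptotic_pos d (rev_line g1) (rev_line r) /\
    asymptotic_pos d (rev_line g2) r /\
    side_slim d delta g1 g2 r /\
    side_slim d delta g2 g1 r /\
    side_slim d delta r g1 g2.

(* Main.v *)
Require Import Defs.
From Stdlib Require Import Reals Lra Classical ClassicalEpsilon.
Open Scope R_scope.

Lemma Rabs_cases x : (Rabs x = x /\ 0 <= x) \/ (Rabs x = -x /\ x < 0).
Proof. unfold Rabs; destruct (Rcase_abs x); [right|left]; split; lra. Qed.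

Ltac rabs := repeat match goal with
 | |- context [Rabs ?x] => let Hr := fresh in destruct (Rabs_cases x) as [[Hr ?]|[Hr ?]]; rewrite Hr in *; clear Hr
 | H : context [Rabs ?x] |- _ => let Hr := fresh in destruct (Rabs_cases x) as [[Hr ?]|[Hr ?]]; rewrite Hr in *; clear Hr end; try lra.

Lemma exp_le_m x y : x <= y -> exp x <= exp y.
Proof. intros [H|H]; [left; apply exp_increasing; auto | subst; lra]. Qed.
Lemma exp_le_inv x y : exp x <= exp y -> x <= y.
Proof. intros H. destruct (Rle_dec x y); auto. assert (exp y < exp x) by (apply exp_increasing; lra). lra. Qed.
Lemma ln_le_m x y : 0 < x -> x <= y -> ln x <= ln y.
Proof. intros Hx [H|H]; [left; apply ln_increasing; auto | subst; lra]. Qed.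

Lemma Rmax_ind (P : R -> Prop) a b : P a -> P b -> P (Rmax a b).
Proof. unfold Rmax; destruct (Rle_dec a b); auto. Qed.

Lemma near_pair {X} (d : X -> X -> R) e A B P Q :
  (forall p q, d p q = d q p) -> (forall p q r, d p r <= d p q + d q r) ->
  d A P < e -> d B Q < e -> d A B - 2*e < d P Q /\ d P Q < d A B + 2*e.
Proof.
  intros Hs Ht H1 H2.
  pose proof (Ht A P B). pose proof (Ht P Q B).
  pose proof (Ht P A Q). pose proof (Ht A B Q).
  pose proof (Hs P A). pose proof (Hs Q B).
  split; lra.
Qed.

Section Geom.
Variables (X : Type) (d : X -> X -> R) (g1 g2 r : R -> X) (delta Rb T1 T2 C1 C2 : R).
Hypothesis Hs : forall p q, d p q = d q p.
Hypothesis Ht : forall p q r, d p r <= d p q + d q r.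
Hypothesis G1 : is_geodesic_line d g1.
Hypothesis G2 : is_geodesic_line d g2.
Hypothesis Gr : is_geodesic_line d r.
Hypothesis A1 : forall u, 0 <= u -> d (rev_line g1 u) (rev_line r u) <= C1.
Hypothesis A2 : forall u, 0 <= u -> d (rev_line g2 u) (r u) <= C2.
Hypothesis S1 : side_slim d delta g1 g2 r.
Hypothesis S2 : side_slim d delta g2 g1 r.
Hypothesis Hd : 0 < delta.
Hypothesis HRb : 0 <= Rb.
Hypothesis H1 : forall u, T1 <= u -> d (g1 u) (g2 u) <= Rb.
Hypothesis H2 : forall u, u <= T2 -> Rb + 10*(delta+1) < d (g1 u) (g2 u).

Let e := delta + 1.

Lemma busemann t s : Rabs (t - s) - Rb <= d (g1 t) (g2 s).
Proof.
  set (U := Rmax (Rmax t s) T1).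
  assert (t <= U /\ s <= U /\ T1 <= U) as (?&?&?).
  { unfold U. pose proof (Rmax_l (Rmax t s) T1). pose proof (Rmax_r (Rmax t s) T1).
    pose proof (Rmax_l t s). pose proof (Rmax_r t s). lra. }
  pose proof (H1 U ltac:(lra)).
  pose proof (Ht (g1 t) (g2 s) (g2 U)). pose proof (Ht (g1 t) (g2 U) (g1 U)).
  pose proof (Ht (g2 s) (g1 t) (g1 U)). pose proof (Ht (g2 s) (g1 U) (g2 U)).
  pose proof (G1 t U). pose proof (G2 s U). pose proof (Hs (g2 U) (g1 U)).
  pose proof (Hs (g2 s) (g1 t)). pose proof (G2 U s). pose proof (G1 U t).
  rabs.
Qed.

Lemma near1 t : t <= T2 -> exists v, d (g1 t) (r v) < e.
Proof.
  intros Ht2. destruct (S1 t 1 ltac:(lra)) as (a & [[s' Hs']|[v Hv]] & Ha); subst.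
  - exfalso. pose proof (busemann t s'). pose proof (H2 t Ht2).
    pose proof (Ht (g1 t) (g2 s') (g2 t)). rewrite (G2 s' t) in *. unfold e in *. rabs.
  - exists v. unfold e. lra.
Qed.

Lemma near2 s : s <= T2 -> exists w, d (g2 s) (r w) < e.
Proof.
  intros Hs2. destruct (S2 s 1 ltac:(lra)) as (a & [[t' Ht']|[w Hw]] & Ha); subst.
  - exfalso. pose proof (busemann t' s). pose proof (H2 s Hs2).
    rewrite (Hs (g2 s) (g1 t')) in Ha.
    pose proof (Ht (g1 s) (g1 t') (g2 s)). rewrite (G1 s t') in *. unfold e in *. rabs.
  - exists w. unfold e. lra.
Qed.

Lemma orient1 t v t' v' : t' <= t -> t' <= 0 -> t' < (v + t - 3*e - C1)/2 ->
  d (g1 t) (r v) < e -> d (g1 t') (r v') < e -> Rabs ((v - t) - (v' - t')) < 2*e.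
Proof.
  intros h1 h2 h3 n1 n2.
  destruct (near_pair d e _ _ _ _ Hs Ht n1 n2) as [p1 p2].
  rewrite G1, Gr in *.
  pose proof (A1 (- t') ltac:(lra)) as a1. unfold rev_line in a1.
  rewrite Ropp_involutive in a1.
  pose proof (Ht (r v') (g1 t') (r t')). rewrite (Hs (r v') (g1 t')) in *. rewrite Gr in *.
  rabs.
Qed.

Lemma orient2 s w s' w' : s' <= s -> s' <= 0 -> s' < (s - w - 3*e - C2)/2 ->
  d (g2 s) (r w) < e -> d (g2 s') (r w') < e -> Rabs ((w + s) - (w' + s')) < 2*e.
Proof.
  intros h1 h2 h3 n1 n2.
  destruct (near_pair d e _ _ _ _ Hs Ht n1 n2) as [p1 p2].
  rewrite G2, Gr in *.
  pose proof (A2 (- s') ltac:(lra)) as a1. unfold rev_line in a1.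
  rewrite Ropp_involutive in a1.
  pose proof (Ht (r w') (g2 s') (r (- s'))). rewrite (Hs (r w') (g2 s')) in *. rewrite Gr in *.
  rabs.
Qed.

Lemma coh1 t1 v1 t2 v2 : t1 <= T2 -> t2 <= T2 -> d (g1 t1) (r v1) < e -> d (g1 t2) (r v2) < e ->
  Rabs ((v1 - t1) - (v2 - t2)) < 4*e.
Proof.
  intros h1 h2 n1 n2.
  assert (exists t', t' <= t1 /\ t' <= t2 /\ t' <= 0 /\ t' < (v1+t1-3*e-C1)/2 /\ t' < (v2+t2-3*e-C1)/2) as [t' (?&?&?&?&?)].
  { exists (Rmin (Rmin t1 t2) (Rmin 0 (Rmin ((v1+t1-3*e-C1)/2 - 1) ((v2+t2-3*e-C1)/2 - 1)))).
  pose proof (Rmin_l (Rmin t1 t2) (Rmin 0 (Rmin ((v1+t1-3*e-C1)/2 - 1) ((v2+t2-3*e-C1)/2 - 1)))).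
  pose proof (Rmin_r (Rmin t1 t2) (Rmin 0 (Rmin ((v1+t1-3*e-C1)/2 - 1) ((v2+t2-3*e-C1)/2 - 1)))).
  pose proof (Rmin_l t1 t2). pose proof (Rmin_r t1 t2).
  pose proof (Rmin_l 0 (Rmin ((v1+t1-3*e-C1)/2 - 1) ((v2+t2-3*e-C1)/2 - 1))).
  pose proof (Rmin_r 0 (Rmin ((v1+t1-3*e-C1)/2 - 1) ((v2+t2-3*e-C1)/2 - 1))).
  pose proof (Rmin_l ((v1+t1-3*e-C1)/2 - 1) ((v2+t2-3*e-C1)/2 - 1)).
  pose proof (Rmin_r ((v1+t1-3*e-C1)/2 - 1) ((v2+t2-3*e-C1)/2 - 1)).
  lra. }
  destruct (near1 t' ltac:(lra)) as [v' nv'].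
  pose proof (orient1 t1 v1 t' v' ltac:(lra) ltac:(lra) ltac:(lra) n1 nv').
  pose proof (orient1 t2 v2 t' v' ltac:(lra) ltac:(lra) ltac:(lra) n2 nv').
  rabs.
Qed.

Lemma coh2 s1 w1 s2 w2 : s1 <= T2 -> s2 <= T2 -> d (g2 s1) (r w1) < e -> d (g2 s2) (r w2) < e ->
  Rabs ((w1 + s1) - (w2 + s2)) < 4*e.
Proof.
  intros h1 h2 n1 n2.
  assert (exists s', s' <= s1 /\ s' <= s2 /\ s' <= 0 /\ s' < (s1-w1-3*e-C2)/2 /\ s' < (s2-w2-3*e-C2)/2) as [s' (?&?&?&?&?)].
  { exists (Rmin (Rmin s1 s2) (Rmin 0 (Rmin ((s1-w1-3*e-C2)/2 - 1) ((s2-w2-3*e-C2)/2 - 1)))).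
  pose proof (Rmin_l (Rmin s1 s2) (Rmin 0 (Rmin ((s1-w1-3*e-C2)/2 - 1) ((s2-w2-3*e-C2)/2 - 1)))).
  pose proof (Rmin_r (Rmin s1 s2) (Rmin 0 (Rmin ((s1-w1-3*e-C2)/2 - 1) ((s2-w2-3*e-C2)/2 - 1)))).
  pose proof (Rmin_l s1 s2). pose proof (Rmin_r s1 s2).
  pose proof (Rmin_l 0 (Rmin ((s1-w1-3*e-C2)/2 - 1) ((s2-w2-3*e-C2)/2 - 1))).
  pose proof (Rmin_r 0 (Rmin ((s1-w1-3*e-C2)/2 - 1) ((s2-w2-3*e-C2)/2 - 1))).
  pose proof (Rmin_l ((s1-w1-3*e-C2)/2 - 1) ((s2-w2-3*e-C2)/2 - 1)).
  pose proof (Rmin_r ((s1-w1-3*e-C2)/2 - 1) ((s2-w2-3*e-C2)/2 - 1)).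
  lra. }
  destruct (near2 s' ltac:(lra)) as [w' nw'].
  pose proof (orient2 s1 w1 s' w' ltac:(lra) ltac:(lra) ltac:(lra) n1 nw').
  pose proof (orient2 s2 w2 s' w' ltac:(lra) ltac:(lra) ltac:(lra) n2 nw').
  rabs.
Qed.

Lemma main_geom t s : t <= T2 -> s <= T2 -> 2*T2 - t - s - 10*(delta+1) <= d (g1 t) (g2 s).
Proof.
  intros ht hs.
  destruct (near1 T2 ltac:(lra)) as [v0 n0]. destruct (near2 T2 ltac:(lra)) as [w0 m0].
  assert (v0 <= w0).
  { destruct (Rle_dec v0 w0) as [|Hn]; auto. exfalso.
    set (u := T2 - (v0 - w0)/2).
    destruct (near1 u ltac:(unfold u; lra)) as [vu nu].
    destruct (near2 u ltac:(unfold u; lra)) as [wu mu].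
    pose proof (coh1 u vu T2 v0 ltac:(unfold u; lra) ltac:(lra) nu n0).
    pose proof (coh2 u wu T2 w0 ltac:(unfold u; lra) ltac:(lra) mu m0).
    pose proof (H2 u ltac:(unfold u; lra)).
    pose proof (Ht (g1 u) (r vu) (g2 u)). pose proof (Ht (r vu) (r wu) (g2 u)).
    rewrite (Hs (r wu) (g2 u)) in *. rewrite Gr in *. unfold u, e in *. rabs. }
  destruct (near1 t ht) as [vt nt]. destruct (near2 s hs) as [ws ms].
  pose proof (coh1 t vt T2 v0 ht ltac:(lra) nt n0).
  pose proof (coh2 s ws T2 w0 hs ltac:(lra) ms m0).
  destruct (near_pair d e _ _ _ _ Hs Ht nt ms) as [p1 p2].
  rewrite Gr in *. unfold e in *. rabs.
Qed.

End Geom.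

Lemma getN (n:nat) (X:Type) (dX : X->X->R) (F : Hn n -> X) (M : R) :
 (forall (xs xs' : nat -> Vec (n - 1)) (ts : nat -> R),
     cv_infty (fun k => exp (- ts k) * euc_dist (xs k) (xs' k)) ->
     cv_infty (fun k => dX (F (xs k, ts k)) (F (xs' k, ts k)))) ->
 exists N, 0 < N /\ forall x x' t, N <= exp(-t)*euc_dist x x' -> M < dX (F(x,t)) (F(x',t)).
Proof.
  intros H4. apply NNPP; intro Hn.
  assert (Hk: forall k:nat, exists p : Vec (n-1) * Vec (n-1) * R,
    INR k + 1 <= exp(- snd p) * euc_dist (fst (fst p)) (snd (fst p)) /\
    dX (F (fst (fst p), snd p)) (F (snd (fst p), snd p)) <= M).
  { intro k. apply NNPP; intro Hc. apply Hn. exists (INR k + 1). split.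
    - pose proof (pos_INR k); lra.
    - intros x x' t Hle. apply Rnot_le_lt. intro Hle2. apply Hc. exists ((x,x'),t). simpl; auto. }
  set (f := fun k => proj1_sig (constructive_indefinite_description _ (Hk k))).
  assert (Hf : forall k, INR k + 1 <= exp(- snd (f k)) * euc_dist (fst (fst (f k))) (snd (fst (f k))) /\
    dX (F (fst (fst (f k)), snd (f k))) (F (snd (fst (f k)), snd (f k))) <= M).
  { intro k. exact (proj2_sig (constructive_indefinite_description _ (Hk k))). }
  specialize (H4 (fun k => fst (fst (f k))) (fun k => snd (fst (f k))) (fun k => snd (f k))).
  assert (cv : cv_infty (fun k => exp (- snd (f k)) * euc_dist (fst (fst (f k))) (snd (fst (f k))))).
  { intro M0. destruct (INR_archimed 1 M0) as [N0 HN0]; [lra|]. exists N0. intros k Hk'.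
    pose proof (Hf k). apply le_INR in Hk'. lra. }
  destruct (H4 cv M) as [N0 HN]. specialize (HN N0 (Nat.le_refl _)). pose proof (Hf N0).
  simpl in HN. lra.
Qed.

Lemma sumsq0 m f : (forall i, f i = 0) -> sumsq m f = 0.
Proof. intros H; induction m; simpl; [lra|]. rewrite IHm, H. lra. Qed.

Lemma euc_self {m} (x : Vec m) : euc_dist x x = 0.
Proof. unfold euc_dist. rewrite sumsq0; [apply sqrt_0|]. intros; lra. Qed.

Lemma comb_up dXv dHv t s U D z c Rb : 0 < c -> dXv <= 2*U - t - s + Rb -> ln z <= dHv ->
  z = (D*D + exp t*exp t + exp s*exp s)/(2*exp t*exp s) ->
  exp U * exp U <= c*(D*D+exp t*exp t+exp s*exp s) -> dXv - dHv <= Rb + ln(2*c).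
Proof.
  intros hc h1 h2 hz h3.
  pose proof (exp_pos t). pose proof (exp_pos s).
  assert (hz0 : 0 < z).
  { rewrite hz. apply Rdiv_lt_0_compat; [|nra]. assert (0 < exp t * exp t) by nra. nra. }
  assert (exp (2*U - t - s) <= 2*c*z).
  { replace (2*U - t - s) with (U + U + - t + - s) by ring. rewrite !exp_plus, !exp_Ropp.
    rewrite hz. apply Rmult_le_reg_r with (exp t * exp s); [nra|].
    field_simplify; try split; try lra; try nra. }
  apply ln_le_m in H1; [|apply exp_pos]. rewrite ln_exp in H1.
  rewrite ln_mult in H1; [|lra|auto]. lra.
Qed.

Lemma comb_low dXv dHv t s V D z c K0 : 1 <= c -> 2*V - t - s - K0 <= dXv -> dHv <= ln 2 + ln z ->
  z = (D*D + exp t*exp t + exp s*exp s)/(2*exp t*exp s) ->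
  D*D <= c*(exp V*exp V) -> exp t * exp t <= c*(exp V*exp V) -> exp s * exp s <= c*(exp V*exp V) ->
  dHv - dXv <= ln(3*c) + K0.
Proof.
  intros hc h1 h2 hz h3 h4 h5.
  pose proof (exp_pos t). pose proof (exp_pos s).
  assert (hz0 : 0 < z).
  { rewrite hz. apply Rdiv_lt_0_compat; [|nra]. assert (0 < exp t * exp t) by nra. nra. }
  assert (2*z <= 3*c*exp (2*V - t - s)).
  { replace (2*V - t - s) with (V + V + - t + - s) by ring. rewrite !exp_plus, !exp_Ropp.
    rewrite hz. apply Rmult_le_reg_r with (exp t * exp s); [nra|].
    field_simplify; try split; try lra; try nra. }
  assert (hp : 0 < 2*z) by lra. pose proof (ln_le_m _ _ hp H1) as L.
  rewrite (ln_mult 2 z), (ln_mult (3*c) (exp _)), (ln_mult 3 c), ln_exp in L; try lra; try apply exp_pos.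
  assert (0 < ln 3). { rewrite <- ln_1. apply ln_increasing; lra. }
  rewrite ln_mult; lra.
Qed.

Theorem lemma2p2 (X : Type) (dX : X -> X -> R) (n : nat)
  (delta eps Rb : R) (F : Hn n -> X) :
  is_metric dX ->
  geodesic_space dX ->
  (2 <= n)%nat ->
  0 < delta -> 0 < eps -> 0 < Rb ->
  (forall x : Vec (n - 1), is_geodesic_line dX (fun t => F (eta x t))) ->
  (forall x x' : Vec (n - 1), x <> x' ->
     ideal_slim_sides dX delta (fun t => F (eta x t)) (fun t => F (eta x' t))) ->
  (forall (x x' : Vec (n - 1)) (t : R),
     exp (- t) * euc_dist x x' < eps -> dX (F (x, t)) (F (x', t)) <= Rb) ->
  (forall (xs xs' : nat -> Vec (n - 1)) (ts : nat -> R),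
     cv_infty (fun k => exp (- ts k) * euc_dist (xs k) (xs' k)) ->
     cv_infty (fun k => dX (F (xs k, ts k)) (F (xs' k, ts k)))) ->
  exists K : R, 0 <= K /\
    forall p q : Hn n, Rabs (dH p q - dX (F p) (F q)) <= K.
Proof.
  intros Hmet Hgeo Hn2 Hd He HR Hgl Hsl H3 H4.
  destruct Hmet as (Hpos & Hz & Hs & Ht).
  destruct (getN n X dX F (Rb + 10*(delta+1)) H4) as [N [HN HNp]].
  set (c1 := 1 + 4/(eps*eps)). set (c2 := 1 + N*N).
  assert (hc1 : 1 <= c1). { unfold c1. assert (0 < eps*eps) by nra.
    assert (0 <= 4/(eps*eps)) by (apply Rlt_le, Rdiv_lt_0_compat; lra). lra. }
  assert (hc2 : 1 <= c2) by (unfold c2; nra).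
  assert (L1 : 0 <= ln (2*c1)) by (rewrite <- ln_1; apply ln_le_m; lra).
  assert (L2 : 0 <= ln (3*c2)) by (rewrite <- ln_1; apply ln_le_m; lra).
  assert (GL : forall x a b, dX (F (x,a)) (F (x,b)) = Rabs (a - b)).
  { intros x a b. exact (Hgl x a b). }
  assert (UP : forall x x' t s U, t <= U -> s <= U -> exp(-U)*euc_dist x x' < eps ->
     dX (F (x,t)) (F (x',s)) <= 2*U - t - s + Rb).
  { intros x x' t s U h1 h2 h3. pose proof (H3 x x' U h3).
    pose proof (Ht (F (x,t)) (F (x,U)) (F (x',s))). pose proof (Ht (F (x,U)) (F (x',U)) (F (x',s))).
    pose proof (GL x t U). pose proof (GL x' U s). rabs. }
  assert (LO : forall x x' t s U, t <= U -> s <= U -> exp(-U)*euc_dist x x' < eps ->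
     Rabs (t - s) - Rb <= dX (F (x,t)) (F (x',s))).
  { intros x x' t s U h1 h2 h3. pose proof (H3 x x' U h3).
    pose proof (Ht (F (x,t)) (F (x',s)) (F (x,U))). pose proof (Ht (F (x',s)) (F (x',U)) (F (x,U))).
    pose proof (Ht (F (x',s)) (F (x,t)) (F (x',U))). pose proof (Ht (F (x,t)) (F (x,U)) (F (x',U))).
    pose proof (Hs (F (x',s)) (F (x,t))). pose proof (Hs (F (x',U)) (F (x,U))).
    pose proof (GL x t U). pose proof (GL x' s U). rabs. }
  exists ((Rb + ln (2*c1)) + (ln (3*c2) + Rb + 10*(delta+1))). split; [lra|].
  intros [x t] [x' s]. unfold dH. cbv beta iota.
  set (D := euc_dist x x').
  assert (hD : 0 <= D) by apply sqrt_pos.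
  pose proof (exp_pos t) as ha. pose proof (exp_pos s) as hb.
  set (z := 1 + (D*D + (exp t - exp s)*(exp t - exp s))/(2*exp t*exp s)).
  assert (zeq : z = (D*D + exp t*exp t + exp s*exp s)/(2*exp t*exp s)) by (unfold z; field; repeat split; apply Rgt_not_eq; lra).
  assert (z1 : 1 <= z).
  { unfold z. assert (0 <= (D*D + (exp t - exp s)*(exp t - exp s))/(2*exp t*exp s)); [|lra].
    apply Rmult_le_pos; [pose proof (Rle_0_sqr D); pose proof (Rle_0_sqr (exp t - exp s)); unfold Rsqr in *; lra|]. apply Rlt_le, Rinv_0_lt_compat. pose proof (Rmult_lt_0_compat _ _ ha hb); lra. }
  assert (AC1 : ln z <= arcosh z).
  { unfold arcosh. apply ln_le_m; [lra|]. pose proof (sqrt_pos (z*z-1)). lra. }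
  assert (AC2 : arcosh z <= ln 2 + ln z).
  { unfold arcosh. rewrite <- ln_mult; [|lra|lra]. apply ln_le_m.
    - pose proof (sqrt_pos (z*z-1)). lra.
    - assert (hq : sqrt (z*z-1) <= sqrt (z*z)) by (apply sqrt_le_1_alt; lra). rewrite sqrt_square in hq by lra.
      lra. }
  destruct hD as [hD|hD].
  -
    set (T1 := ln (2*D/eps)). set (T2 := ln (D/N)).
    assert (eT1 : exp T1 = 2*D/eps) by (apply exp_ln; apply Rdiv_lt_0_compat; lra).
    assert (eT2 : exp T2 = D/N) by (apply exp_ln; apply Rdiv_lt_0_compat; lra).
    assert (HT1 : forall u, T1 <= u -> exp(-u)*D < eps).
    { intros u hu. pose proof (exp_le_m (-u) (-T1) ltac:(lra)) as h.
      rewrite (exp_Ropp T1), eT1 in h.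
      assert (exp (-u) * D <= / (2*D/eps) * D) by (apply Rmult_le_compat_r; lra).
      replace (/ (2*D/eps) * D) with (eps/2) in H by (field; lra). lra. }
    assert (HT2 : forall u, u <= T2 -> N <= exp(-u)*D).
    { intros u hu. pose proof (exp_le_m (-T2) (-u) ltac:(lra)) as h.
      rewrite (exp_Ropp T2), eT2 in h.
      assert (/ (D/N) * D <= exp (-u) * D) by (apply Rmult_le_compat_r; lra).
      replace (/ (D/N) * D) with N in H by (field; lra). lra. }
    apply Rabs_le. split.
    +
      set (U := Rmax (Rmax t s) T1).
      assert (t <= U /\ s <= U /\ T1 <= U) as (?&?&?).
      { unfold U. pose proof (Rmax_l (Rmax t s) T1). pose proof (Rmax_r (Rmax t s) T1).
        pose proof (Rmax_l t s). pose proof (Rmax_r t s). lra. }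
      pose proof (UP x x' t s U H H0 (HT1 U H1)) as u1.
      assert (exp U * exp U <= c1*(D*D+exp t*exp t+exp s*exp s)).
      { unfold U. apply Rmax_ind; [apply Rmax_ind|].
        - assert (exp t * exp t <= 1*(D*D+exp t*exp t+exp s*exp s)) by nra. nra.
        - assert (exp s * exp s <= 1*(D*D+exp t*exp t+exp s*exp s)) by nra. nra.
        - rewrite eT1. replace (2*D/eps*(2*D/eps)) with (4/(eps*eps)*(D*D)) by (field; lra).
          unfold c1. assert (0 <= 4/(eps*eps)) by (apply Rlt_le, Rdiv_lt_0_compat; nra).
          nra. }
      pose proof (comb_up _ _ t s U D z c1 Rb ltac:(lra) u1 AC1 zeq H2). lra.
    + set (V := Rmax (Rmax t s) T2).
      assert (t <= V /\ s <= V /\ T2 <= V) as (?&?&?).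
      { unfold V. pose proof (Rmax_l (Rmax t s) T2). pose proof (Rmax_r (Rmax t s) T2).
        pose proof (Rmax_l t s). pose proof (Rmax_r t s). lra. }
      assert (lowX : 2*V - t - s - (Rb + 10*(delta+1)) <= dX (F (x,t)) (F (x',s))).
      { destruct (Rle_dec t T2) as [ht|ht]; [destruct (Rle_dec s T2) as [hs|hs]|].
        -
          assert (x <> x') as hne. { intro E. subst x'. unfold D in hD. rewrite euc_self in hD. lra. }
          destruct (Hsl x x' hne) as (rr & Gr & _ & [C1 A1] & [C2 A2] & S1 & S2 & _).
          assert (V = T2) as ->. { unfold V. unfold Rmax. repeat destruct Rle_dec; lra. }
          pose proof (main_geom X dX (fun t => F (eta x t)) (fun t => F (eta x' t)) rr delta Rb T1 T2 C1 C2
            Hs Ht (Hgl x) (Hgl x') Gr A1 A2 S1 S2 Hd ltac:(lra)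
            (fun u hu => H3 x x' u (HT1 u hu))
            (fun u hu => HNp x x' u (HT2 u hu)) t s ht hs) as m.
          cbv beta in m. unfold eta in m. lra.
        - assert (V = s) as ->. { unfold V. unfold Rmax. repeat destruct Rle_dec; lra. }
          pose proof (LO x x' t s (Rmax (Rmax t s) T1)) as H5.
          pose proof (Rmax_l (Rmax t s) T1). pose proof (Rmax_r (Rmax t s) T1).
          pose proof (Rmax_l t s). pose proof (Rmax_r t s).
          specialize (H5 ltac:(lra) ltac:(lra) (HT1 (Rmax (Rmax t s) T1) ltac:(lra))). rabs.
        - assert (V = Rmax t s) as ->. { unfold V. unfold Rmax. repeat destruct Rle_dec; lra. }
          pose proof (LO x x' t s (Rmax (Rmax t s) T1)) as H5.
          pose proof (Rmax_l (Rmax t s) T1). pose proof (Rmax_r (Rmax t s) T1).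
          pose proof (Rmax_l t s). pose proof (Rmax_r t s).
          specialize (H5 ltac:(lra) ltac:(lra) (HT1 (Rmax (Rmax t s) T1) ltac:(lra))).
          revert H5. clear -Hd. unfold Rmax. repeat destruct Rle_dec; intros; rabs. }
      assert (hV : exp T2 <= exp V) by (apply exp_le_m; lra).
      assert (htV : exp t <= exp V) by (apply exp_le_m; lra).
      assert (hsV : exp s <= exp V) by (apply exp_le_m; lra).
      pose proof (exp_pos V).
      assert (D <= N * exp V).
      { rewrite eT2 in hV. apply Rmult_le_compat_l with (r := N) in hV; [|lra].
        replace (N * (D/N)) with D in hV by (field; lra). lra. }
      pose proof (comb_low _ _ t s V D z c2 _ hc2 lowX AC2 zeq
        ltac:(unfold c2; nra) ltac:(unfold c2; nra) ltac:(unfold c2; nra)).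
      lra.
  -

    assert (E0 : forall U, exp (-U) * D < eps) by (intros; rewrite <- hD; lra).
    set (U := Rmax t s).
    assert (t <= U /\ s <= U) as (?&?) by (unfold U; split; [apply Rmax_l|apply Rmax_r]).
    apply Rabs_le. split.
    + pose proof (UP x x' t s U H H0 (E0 U)) as u1.
      assert (exp U * exp U <= c1*(D*D+exp t*exp t+exp s*exp s)).
      { unfold U. apply Rmax_ind.
        - assert (exp t * exp t <= 1*(D*D+exp t*exp t+exp s*exp s)) by nra. nra.
        - assert (exp s * exp s <= 1*(D*D+exp t*exp t+exp s*exp s)) by nra. nra. }
      pose proof (comb_up _ _ t s U D z c1 Rb ltac:(lra) u1 AC1 zeq H1). lra.
    + pose proof (LO x x' t s U H H0 (E0 U)) as l1.
      assert (lowX : 2*U - t - s - (Rb + 10*(delta+1)) <= dX (F (x,t)) (F (x',s))).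
      { revert l1. unfold U, Rmax. destruct Rle_dec; intros; rabs. }
      assert (htV : exp t <= exp U) by (apply exp_le_m; lra).
      assert (hsV : exp s <= exp U) by (apply exp_le_m; lra).
      pose proof (exp_pos U).
      pose proof (comb_low _ _ t s U D z c2 _ hc2 lowX AC2 zeq
        ltac:(unfold c2; nra) ltac:(unfold c2; nra) ltac:(unfold c2; nra)).
      lra.
Qed.
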